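(* Let $D$ be a function assigning a nonnegative real number to each pair of density operators on the same finite-dimensional space and which is contractive under CPTP maps, i.e. $D(\Phi(\rho),\Phi(\sigma))\le D(\rho,\sigma)$ for all CPTP maps $\Phi$. Let $\rho$ be a density operator on $\mathbb{C}^d$, $\rho'=U_A(\rho\otimes|0\rangle\langle0|^{\otimes d})U_A^\dagger$ and $\rho''=\Delta(\rho')$. Then for every $2\le k\le d$, $$C_D^{(k)}(\rho)\ge E_D^{(k+1)}(\rho'),\qquad C_D^{(k)}(\rho)\ge E_D^{(k)}(\rho''),$$ where $E_D^{(k+1)}(\rho')$ is computed with respect to the $d+1$ parties (qudit and $d$ qubits) and $E_D^{(k)}(\rho'')$ with respect to the $d$ qubit parties.
   Context: Fix an orthonormal basis $\{|i\rangle\}_{i=1}^d$ of $\mathbb{C}^d$. The coherence rank $\mathrm{CR}(|\psi\rangle)$ is the number of nonzero coefficients of $|\psi\rangle$ in this basis; $\mathrm{CN}(\rho)=\min\max_i\mathrm{CR}(|\psi_i\rangle)$ over pure-state decompositions $\rho=\sum_ip_i|\psi_i\rangle\langle\psi_i|$. $\mathcal{I}^{(k)}$ is the set of states with $\mathrm{CN}\le k$. A multipartite pure state is $k$-producible if it is a tensor product of factors each on at most $k$ parties, a mixed state is $k$-producible if it is a convex combination of such; $\mathcal{P}^{(k)}$ denotes the set of $k$-producible states. Define $E_D^{(k)}(\rho)=\inf_{\varsigma\in\mathcal{P}^{(k-1)}}D(\rho,\varsigma)$ and $C_D^{(k)}(\rho)=\inf_{\sigma\in\mathcal{I}^{(k-1)}}D(\rho,\sigma)$.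 Notation $|\underline{2^{d-i}}\rangle=|0\rangle^{\otimes(i-1)}|1\rangle|0\rangle^{\otimes(d-i)}\in(\mathbb{C}^2)^{\otimes d}$. $U_A=\sum_{i=1}^d|i\rangle\langle i|\otimes\mathbb{1}_2^{\otimes(i-1)}\otimes\sigma_x\otimes\mathbb{1}_2^{\otimes(d-i)}$. With $\mathcal{F}|j\rangle=\frac1{\sqrt d}\sum_m e^{2\pi ijm/d}|m\rangle$ and $U_D^{(m)}=\bigotimes_{j=1}^d(|0\rangle\langle0|+e^{-2\pi ijm/d}|1\rangle\langle1|)$, the map $\Delta$ from qudit-plus-$d$-qubit states to $d$-qubit states is $\Delta(X)=\sum_{m=1}^dU_D^{(m)}\mathrm{Tr}_{\mathrm{qudit}}[(|m\rangle\langle m|\otimes\mathbb{1})(\mathcal{F}\otimes\mathbb{1})X(\mathcal{F}^\dagger\otimes\mathbb{1})]U_D^{(m)\dagger}$. *)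

(* Defs.v *)
From Stdlib Require Import Reals List Arith.
From Stdlib Require Import ClassicalEpsilon.
Import ListNotations.
Open Scope R_scope.

Record Cplx := mkC { re : R ; im : R }.
Definition C0 : Cplx := mkC 0 0.
Definition C1 : Cplx := mkC 1 0.
Definition RtoC (x : R) : Cplx := mkC x 0.
Definition Cadd (a b : Cplx) : Cplx := mkC (re a + re b) (im a + im b).
Definition Cmul (a b : Cplx) : Cplx :=
  mkC (re a * re b - im a * im b) (re a * im b + im a * re b).
Definition Cconj (a : Cplx) : Cplx := mkC (re a) (- im a).
Definition Cnorm2 (a : Cplx) : R := re a * re a + im a * im a.
Definition Cexpi (t : R) : Cplx := mkC (cos t) (sin t).

Definition Ceq_dec (a b : Cplx) : {a = b} + {a <> b}.
Proof.
  destruct a as [a1 a2], b as [b1 b2].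
  destruct (Req_EM_T a1 b1) as [e1|n1]; [destruct (Req_EM_T a2 b2) as [e2|n2]|].
  - left; subst; reflexivity.
  - right; intro H; inversion H; auto.
  - right; intro H; inversion H; auto.
Defined.

Fixpoint Csum (n : nat) (f : nat -> Cplx) : Cplx :=
  match n with O => C0 | S n' => Cadd (Csum n' f) (f n') end.
Fixpoint Cprod (n : nat) (f : nat -> Cplx) : Cplx :=
  match n with O => C1 | S n' => Cmul (Cprod n' f) (f n') end.
Fixpoint Rsum (n : nat) (f : nat -> R) : R :=
  match n with O => 0 | S n' => Rsum n' f + f n' end.

(* basis |0>,...,|n-1> (0-indexed; the paper's |i> is our index i-1) *)
Definition Vec := nat -> Cplx.
Definition Mat := nat -> nat -> Cplx.

Definition supportedV (n : nat) (v : Vec) : Prop := forall i, (n <= i)%nat -> v i = C0.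
Definition supported (n : nat) (A : Mat) : Prop :=
  forall i j, (n <= i)%nat \/ (n <= j)%nat -> A i j = C0.

Definition inb (n i : nat) : bool := Nat.ltb i n.

Definition madd (A B : Mat) : Mat := fun i j => Cadd (A i j) (B i j).
Definition mscale (c : Cplx) (A : Mat) : Mat := fun i j => Cmul c (A i j).
Definition Msum (n : nat) (F : nat -> Mat) : Mat := fun i j => Csum n (fun l => F l i j).
Definition mmul (n : nat) (A B : Mat) : Mat :=
  fun i j => Csum n (fun k => Cmul (A i k) (B k j)).
Definition adj (A : Mat) : Mat := fun i j => Cconj (A j i).
Definition trace (n : nat) (A : Mat) : Cplx := Csum n (fun i => A i i).
Definition idm (n : nat) : Mat :=
  fun i j => if (Nat.eqb i j && inb n i)%bool then C1 else C0.
Definition outer (v : Vec) : Mat := fun i j => Cmul (v i) (Cconj (v j)).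
Definition projm (n m : nat) : Mat :=
  fun i j => if (Nat.eqb i m && Nat.eqb j m && inb n m)%bool then C1 else C0.

Definition quad (n : nat) (A : Mat) (v : Vec) : Cplx :=
  Csum n (fun i => Csum n (fun j => Cmul (Cconj (v i)) (Cmul (A i j) (v j)))).

Definition PSD (n : nat) (A : Mat) : Prop :=
  supported n A /\ forall v, im (quad n A v) = 0 /\ 0 <= re (quad n A v).

Definition density (n : nat) (A : Mat) : Prop := PSD n A /\ trace n A = C1.

Definition vnorm2 (n : nat) (v : Vec) : R := Rsum n (fun i => Cnorm2 (v i)).
Definition unitV (n : nat) (v : Vec) : Prop := supportedV n v /\ vnorm2 n v = 1.

(* Kronecker product A (x) B, B of dimension m; index (i1,i2) |-> i1*m+i2 *)
Definition kron (m : nat) (A B : Mat) : Mat :=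
  fun i j => Cmul (A (i / m)%nat (j / m)%nat) (B (i mod m)%nat (j mod m)%nat).

Definition dimL (l : list (nat * Mat)) : nat := fold_right (fun p acc => (fst p * acc)%nat) 1%nat l.
(* tensor product of a list of (dimension, matrix), first factor most significant *)
Fixpoint kronL (l : list (nat * Mat)) : Mat :=
  match l with
  | [] => idm 1
  | (n, A) :: l' => kron (dimL l') A (kronL l')
  end.

Definition ptrace1 (n1 n2 : nat) (X : Mat) : Mat :=
  fun s s' => if (inb n2 s && inb n2 s')%bool
              then Csum n1 (fun a => X (a * n2 + s)%nat (a * n2 + s')%nat) else C0.

(* block (a,b) of X on C^n (x) C^r *)
Definition block (n r : nat) (X : Mat) (a b : nat) : Mat :=
  fun i j => if (inb n i && inb n j)%bool then X (i * r + a)%nat (j * r + b)%nat else C0.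
(* (Phi (x) id_r)(X) *)
Definition ampl (n m r : nat) (Phi : Mat -> Mat) (X : Mat) : Mat :=
  fun I J => if (inb (m * r) I && inb (m * r) J)%bool
             then Phi (block n r X (I mod r) (J mod r)) (I / r)%nat (J / r)%nat else C0.

Definition CPTP (n m : nat) (Phi : Mat -> Mat) : Prop :=
  (forall A, supported n A -> supported m (Phi A)) /\
  (forall A B, supported n A -> supported n B -> Phi (madd A B) = madd (Phi A) (Phi B)) /\
  (forall c A, supported n A -> Phi (mscale c A) = mscale c (Phi A)) /\
  (forall A, supported n A -> trace m (Phi A) = trace n A) /\
  (forall r X, (0 < r)%nat -> PSD (n * r) X -> PSD (m * r) (ampl n m r Phi X)).

Definition CR (d : nat) (v : Vec) : nat :=
  length (filter (fun i => if Ceq_dec (v i) C0 then false else true) (seq 0 d)).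

Definition incoh (d k : nat) (rho : Mat) : Prop :=
  density d rho /\
  exists (L : nat) (p : nat -> R) (psi : nat -> Vec),
    (forall l, (l < L)%nat -> 0 <= p l /\ unitV d (psi l) /\ (CR d (psi l) <= k)%nat) /\
    Rsum L p = 1 /\
    rho = Msum L (fun l => mscale (RtoC (p l)) (outer (psi l))).

(* a system is a list of local dimensions (party 0 first = most significant) *)
Definition dimprod (ds : list nat) : nat := fold_right Nat.mul 1%nat ds.
Definition digit (ds : list nat) (p I : nat) : nat :=
  ((I / dimprod (skipn (S p) ds)) mod (nth p ds 1%nat))%nat.

(* k-producible pure state: the parties are partitioned into blocks (labels
   blk p < #parties) of at most k parties, and psi is the tensor product of
   block vectors phi b (phi b depends only on the local indices of block b) *)
Definition kprod_pure (ds : list nat) (k : nat) (psi : Vec) : Prop :=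
  let N := dimprod ds in let n := length ds in
  unitV N psi /\
  exists (blk : nat -> nat) (phi : nat -> Vec),
    (forall p, (p < n)%nat -> (blk p < n)%nat) /\
    (forall b, (b < n)%nat -> (length (filter (fun p => Nat.eqb (blk p) b) (seq 0 n)) <= k)%nat) /\
    (forall b I J, (b < n)%nat -> (I < N)%nat -> (J < N)%nat ->
        (forall p, (p < n)%nat -> blk p = b -> digit ds p I = digit ds p J) ->
        phi b I = phi b J) /\
    (forall I, (I < N)%nat -> psi I = Cprod n (fun b => phi b I)).

Definition kprod (ds : list nat) (k : nat) (rho : Mat) : Prop :=
  density (dimprod ds) rho /\
  exists (L : nat) (p : nat -> R) (psi : nat -> Vec),
    (forall l, (l < L)%nat -> 0 <= p l /\ kprod_pure ds k (psi l)) /\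
    Rsum L p = 1 /\
    rho = Msum L (fun l => mscale (RtoC (p l)) (outer (psi l))).

Definition is_inf (S : R -> Prop) (m : R) : Prop :=
  (forall x, S x -> m <= x) /\ (forall b, (forall x, S x -> b <= x) -> b <= m).
Definition Rinf (S : R -> Prop) : R := epsilon (inhabits 0) (is_inf S).

Definition C_D (D : nat -> Mat -> Mat -> R) (d k : nat) (rho : Mat) : R :=
  Rinf (fun x => exists sigma, incoh d (k - 1) sigma /\ x = D d rho sigma).
Definition E_D (D : nat -> Mat -> Mat -> R) (ds : list nat) (k : nat) (rho : Mat) : R :=
  Rinf (fun x => exists s, kprod ds (k - 1) s /\ x = D (dimprod ds) rho s).

Definition qubits (d : nat) : list nat := repeat 2%nat d.
Definition qudit_qubits (d : nat) : list nat := d :: qubits d.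

Definition sigmax : Mat :=
  fun i j => if (Nat.eqb i 0 && Nat.eqb j 1 || Nat.eqb i 1 && Nat.eqb j 0)%bool then C1 else C0.

Definition flip (d i0 : nat) : Mat :=
  kronL (map (fun j => (2%nat, if Nat.eqb j i0 then sigmax else idm 2)) (seq 0 d)).

Definition U_A (d : nat) : Mat :=
  Msum d (fun i => kron (2 ^ d) (projm d i) (flip d i)).

Definition zeros (d : nat) : Mat := kronL (repeat (2%nat, projm 2 0) d).

Definition rho' (d : nat) (rho : Mat) : Mat :=
  let N := (d * 2 ^ d)%nat in
  mmul N (mmul N (U_A d) (kron (2 ^ d) rho (zeros d))) (adj (U_A d)).

(* Fourier matrix: F|j> = 1/sqrt d sum_m e^{2 pi i j m / d}|m>, with paper
   labels j,m in 1..d, i.e. our indices j0 = j-1, m0 = m-1 *)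
Definition Fmat (d : nat) : Mat :=
  fun m0 j0 => if (inb d m0 && inb d j0)%bool then
     Cmul (RtoC (/ sqrt (INR d)))
          (Cexpi (2 * PI * INR ((j0 + 1) * (m0 + 1)) / INR d))
   else C0.

Definition UD (d m0 : nat) : Mat :=
  kronL (map (fun j0 => (2%nat, fun a b =>
      if (Nat.eqb a 0 && Nat.eqb b 0)%bool then C1
      else if (Nat.eqb a 1 && Nat.eqb b 1)%bool
           then Cexpi (- (2 * PI * INR ((j0 + 1) * (m0 + 1)) / INR d))
           else C0)) (seq 0 d)).

Definition Delta_map (d : nat) (X : Mat) : Mat :=
  let Q := (2 ^ d)%nat in let N := (d * Q)%nat in
  let F1 := kron Q (Fmat d) (idm Q) in
  Msum d (fun m0 =>
    mmul Q (mmul Q (UD d m0)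
      (ptrace1 d Q (mmul N (kron Q (projm d m0) (idm Q))
                             (mmul N (mmul N F1 X) (adj F1)))))
      (adj (UD d m0))).

(* Main.v *)
Require Import Defs.
From Stdlib Require Import Reals.
Open Scope R_scope.
From Stdlib Require Import Lra Lia List Arith Ring Field FunctionalExtensionality Classical ClassicalEpsilon.
Import Defs.
Import ListNotations.
Open Scope R_scope.

Lemma Ceq (a b : Cplx) : re a = re b -> im a = im b -> a = b.
Proof. destruct a, b; simpl; intros; subst; auto. Qed.

Definition Copp (a : Cplx) : Cplx := mkC (- re a) (- im a).
Definition Csub a b := Cadd a (Copp b).

Lemma Cring : ring_theory C0 C1 Cadd Cmul Csub Copp (@eq Cplx).
Proof.
  constructor; intros; apply Ceq; destruct x; try destruct y; try destruct z;
  unfold Cadd, Cmul, Csub, Copp, C0, C1; simpl; ring.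
Qed.
Add Ring Cring : Cring.

Lemma Cconj_add a b : Cconj (Cadd a b) = Cadd (Cconj a) (Cconj b).
Proof. apply Ceq; simpl; ring. Qed.
Lemma Cconj_mul a b : Cconj (Cmul a b) = Cmul (Cconj a) (Cconj b).
Proof. apply Ceq; simpl; ring. Qed.
Lemma Cconj0 : Cconj C0 = C0. Proof. apply Ceq; simpl; ring. Qed.
Lemma Cconj1 : Cconj C1 = C1. Proof. apply Ceq; simpl; ring. Qed.
Lemma CconjK a : Cconj (Cconj a) = a. Proof. apply Ceq; simpl; ring. Qed.
Lemma Cconj_RtoC r : Cconj (RtoC r) = RtoC r. Proof. apply Ceq; simpl; ring. Qed.

Lemma Csum_ext n f g : (forall i, (i < n)%nat -> f i = g i) -> Csum n f = Csum n g.
Proof. induction n; simpl; intros; auto. rewrite IHn, H; auto. Qed.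
Lemma Csum_0 n f : (forall i, (i < n)%nat -> f i = C0) -> Csum n f = C0.
Proof. induction n; simpl; intros; auto. rewrite IHn, H; auto. ring. Qed.
Lemma Csum_add n f g : Csum n (fun i => Cadd (f i) (g i)) = Cadd (Csum n f) (Csum n g).
Proof. induction n; simpl; [ring|]. rewrite IHn; ring. Qed.
Lemma Csum_mul_l n c f : Csum n (fun i => Cmul c (f i)) = Cmul c (Csum n f).
Proof. induction n; simpl; [ring|]. rewrite IHn; ring. Qed.
Lemma Csum_mul_r n c f : Csum n (fun i => Cmul (f i) c) = Cmul (Csum n f) c.
Proof. induction n; simpl; [ring|]. rewrite IHn; ring. Qed.
Lemma Csum_conj n f : Cconj (Csum n f) = Csum n (fun i => Cconj (f i)).
Proof. induction n; simpl. apply Cconj0. rewrite Cconj_add, IHn; auto. Qed.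
Lemma Csum_swap n m (f : nat -> nat -> Cplx) :
  Csum n (fun i => Csum m (f i)) = Csum m (fun j => Csum n (fun i => f i j)).
Proof.
  induction n; simpl. symmetry; apply Csum_0; auto.
  rewrite IHn, <- Csum_add; auto.
Qed.
Lemma Csum_delta n i0 f : (i0 < n)%nat -> (forall i, (i < n)%nat -> i <> i0 -> f i = C0) ->
  Csum n f = f i0.
Proof.
  induction n; intros; [lia|]. simpl.
  destruct (Nat.eq_dec i0 n).
  - subst. rewrite Csum_0. ring. intros; apply H0; lia.
  - rewrite IHn. rewrite (H0 n). ring. lia. lia. lia. intros; apply H0; lia.
Qed.
Lemma Csum_plus n m f : Csum (n + m) f = Cadd (Csum n f) (Csum m (fun i => f (n + i)%nat)).
Proof.
  induction m; simpl. rewrite Nat.add_0_r; ring.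
  rewrite Nat.add_succ_r; simpl. rewrite IHm; ring.
Qed.
Lemma Csum_split m r f : Csum (m * r) f = Csum m (fun c => Csum r (fun a => f (c * r + a)%nat)).
Proof.
  induction m; simpl; auto.
  rewrite Nat.add_comm, Csum_plus, IHm. f_equal.
Qed.
Lemma Csum_const0 n : Csum n (fun _ => C0) = C0.
Proof. apply Csum_0; auto. Qed.

Lemma Cprod_shift n f : Cprod (S n) f = Cmul (f O) (Cprod n (fun t => f (S t))).
Proof. induction n; simpl in *. ring. rewrite IHn. ring. Qed.
Lemma Cprod_ext n f g : (forall i, (i < n)%nat -> f i = g i) -> Cprod n f = Cprod n g.
Proof. induction n; simpl; intros; auto. rewrite IHn, H; auto. Qed.
Lemma Cprod_1 n f : (forall i, (i < n)%nat -> f i = C1) -> Cprod n f = C1.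
Proof. induction n; simpl; intros; auto. rewrite IHn, H; auto. ring. Qed.
Lemma Cprod_delta n i0 f : (i0 < n)%nat ->
  Cprod n f = Cmul (f i0) (Cprod n (fun i => if Nat.eqb i i0 then C1 else f i)).
Proof.
  induction n; intros; [lia|]. simpl.
  destruct (Nat.eq_dec i0 n).
  - subst. rewrite Nat.eqb_refl. rewrite (Cprod_ext n (fun i => if Nat.eqb i n then C1 else f i) f). ring.
    intros. destruct (Nat.eqb_spec i n); auto; lia.
  - rewrite IHn; try lia. destruct (Nat.eqb_spec n i0); try lia. ring.
Qed.
Lemma Cprod_0 n i0 f : (i0 < n)%nat -> f i0 = C0 -> Cprod n f = C0.
Proof. intros. rewrite (Cprod_delta n i0); auto. rewrite H0; ring. Qed.

Lemma Rsum_Csum n f : Rsum n f = re (Csum n (fun i => RtoC (f i))).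
Proof. induction n; simpl; auto. rewrite IHn; auto. Qed.
Lemma Rsum_ext n f g : (forall i, (i < n)%nat -> f i = g i) -> Rsum n f = Rsum n g.
Proof. induction n; simpl; intros; auto. rewrite IHn, H; auto. Qed.
Lemma Rsum_0 n f : (forall i, (i < n)%nat -> f i = 0) -> Rsum n f = 0.
Proof. induction n; simpl; intros; auto. rewrite IHn, H; auto. ring. Qed.
Lemma Rsum_ge0 n f : (forall i, (i < n)%nat -> 0 <= f i) -> 0 <= Rsum n f.
Proof. induction n; simpl; intros. lra. pose proof (H n (Nat.lt_succ_diag_r n)). assert (0 <= Rsum n f) by auto. lra. Qed.

Lemma mod_mul_add i r a : (a < r)%nat -> ((i * r + a) mod r = a)%nat.
Proof. intros. rewrite Nat.add_comm, Nat.Div0.mod_add. apply Nat.mod_small; auto. Qed.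
Lemma div_mul_add i r a : (a < r)%nat -> ((i * r + a) / r = i)%nat.
Proof. intros. rewrite Nat.add_comm, Nat.div_add by lia. rewrite Nat.div_small; auto. Qed.

Definition conj_map (n : nat) (V : Mat) (A : Mat) : Mat :=
  fun I J => Csum n (fun i => Csum n (fun j => Cmul (Cmul (V I i) (A i j)) (Cconj (V J j)))).

Lemma quad_conj p q W X v :
  quad p (conj_map q W X) v = quad q X (fun K => Csum p (fun J => Cmul (Cconj (W J K)) (v J))).
Proof.
  unfold quad, conj_map.
  transitivity (Csum p (fun I => Csum p (fun J => Csum q (fun i => Csum q (fun j =>
     Cmul (Cmul (Cconj (v I)) (W I i)) (Cmul (X i j) (Cmul (Cconj (W J j)) (v J)))))))).
  { apply Csum_ext; intros I _. apply Csum_ext; intros J _.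
    rewrite <- Csum_mul_r, <- Csum_mul_l. apply Csum_ext; intros i _.
    rewrite <- Csum_mul_r, <- Csum_mul_l. apply Csum_ext; intros j _. ring. }
  symmetry.
  transitivity (Csum q (fun i => Csum q (fun j => Csum p (fun I => Csum p (fun J =>
     Cmul (Cmul (Cconj (v I)) (W I i)) (Cmul (X i j) (Cmul (Cconj (W J j)) (v J)))))))).
  { apply Csum_ext; intros i _. apply Csum_ext; intros j _.
    rewrite Csum_conj. rewrite <- Csum_mul_r. apply Csum_ext; intros I _.
    rewrite <- !Csum_mul_l. apply Csum_ext; intros J _. rewrite Cconj_mul, CconjK. ring. }
  rewrite (Csum_ext q _ (fun i => Csum p (fun I => Csum q (fun j => Csum p (fun J =>
     Cmul (Cmul (Cconj (v I)) (W I i)) (Cmul (X i j) (Cmul (Cconj (W J j)) (v J)))))))).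
  2:{ intros i _. rewrite Csum_swap; reflexivity. }
  rewrite Csum_swap. apply Csum_ext; intros I _.
  rewrite (Csum_ext q _ (fun i => Csum p (fun J => Csum q (fun j =>
     Cmul (Cmul (Cconj (v I)) (W I i)) (Cmul (X i j) (Cmul (Cconj (W J j)) (v J))))))).
  2:{ intros i _. rewrite Csum_swap; reflexivity. }
  rewrite Csum_swap. reflexivity.
Qed.

Definition isometry (m n : nat) (V : Mat) : Prop :=
  (forall I i, (m <= I)%nat \/ (n <= i)%nat -> V I i = C0) /\
  (forall i j, (i < n)%nat -> (j < n)%nat ->
     Csum m (fun I => Cmul (Cconj (V I i)) (V I j)) = if Nat.eqb i j then C1 else C0).

Definition ampW (r : nat) (V : Mat) : Mat :=
  fun I K => if Nat.eqb (I mod r) (K mod r) then V (I / r)%nat (K / r)%nat else C0.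

Lemma supported_conj m n V A : isometry m n V -> supported m (conj_map n V A).
Proof.
  intros [Hs _] I J HIJ. unfold conj_map. apply Csum_0; intros i Hi. apply Csum_0; intros j Hj.
  destruct HIJ as [H|H].
  - rewrite (Hs I i); auto. ring.
  - rewrite (Hs J j); auto. rewrite Cconj0; ring.
Qed.

Lemma CPTP_conj m n V : isometry m n V -> CPTP n m (conj_map n V).
Proof.
  intros Hiso. pose proof Hiso as [Hs Hu].
  split; [|split; [|split; [|split]]].
  - intros; apply supported_conj; auto.
  - intros A B _ _. extensionality I; extensionality J. unfold conj_map, madd.
    rewrite <- Csum_add. apply Csum_ext; intros i _. rewrite <- Csum_add. apply Csum_ext; intros j _. ring.
  - intros c A _. extensionality I; extensionality J. unfold conj_map, mscale.
    rewrite <- Csum_mul_l. apply Csum_ext; intros i _. rewrite <- Csum_mul_l. apply Csum_ext; intros j _. ring.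
  - intros A HA. unfold trace, conj_map.
    rewrite Csum_swap. apply Csum_ext; intros i Hi.
    rewrite Csum_swap. rewrite (Csum_delta n i).
    + rewrite (Csum_ext m _ (fun I => Cmul (A i i) (Cmul (Cconj (V I i)) (V I i)))).
      rewrite Csum_mul_l, Hu, Nat.eqb_refl; auto. ring. intros; ring.
    + auto.
    + intros j Hj Hji. rewrite (Csum_ext m _ (fun I => Cmul (A i j) (Cmul (Cconj (V I j)) (V I i)))).
      rewrite Csum_mul_l, Hu; auto. destruct (Nat.eqb_spec j i); try lia. ring. intros; ring.
  - intros r X Hr [HXs HX]. split.
    + intros I J HIJ. unfold ampl. assert (Hb: (inb (m * r) I && inb (m * r) J)%bool = false).
      { unfold inb. destruct HIJ as [H|H]; rewrite (proj2 (Nat.ltb_ge _ _) H); [reflexivity| apply Bool.andb_false_r]. }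
      rewrite Hb; auto.
    + intros v.
      assert (E : quad (m * r) (ampl n m r (conj_map n V) X) v = quad (m * r) (conj_map (n * r) (ampW r V) X) v).
      { unfold quad. apply Csum_ext; intros I HI. apply Csum_ext; intros J HJ. f_equal. f_equal.
        unfold ampl, inb. rewrite (proj2 (Nat.ltb_lt _ _) HI), (proj2 (Nat.ltb_lt _ _) HJ). simpl.
        unfold conj_map, block, ampW. rewrite Csum_split.
        apply Csum_ext; intros i Hi.
        rewrite (Csum_delta r (I mod r)); [| apply Nat.mod_upper_bound; lia |].
        2:{ intros a Ha Hne. apply Csum_0; intros K HK.
            rewrite mod_mul_add by auto. destruct (Nat.eqb_spec (I mod r) a); try lia. ring. }
        rewrite mod_mul_add, div_mul_add, Nat.eqb_refl by (apply Nat.mod_upper_bound; lia). rewrite Csum_split.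
        apply Csum_ext; intros j Hj.
        rewrite (Csum_delta r (J mod r)); [| apply Nat.mod_upper_bound; lia |].
        2:{ intros a Ha Hne. rewrite mod_mul_add by auto. destruct (Nat.eqb_spec (J mod r) a); try lia. rewrite Cconj0. ring. }
        rewrite mod_mul_add, div_mul_add, Nat.eqb_refl by (apply Nat.mod_upper_bound; lia). unfold inb.
        rewrite (proj2 (Nat.ltb_lt i n) Hi), (proj2 (Nat.ltb_lt j n) Hj). simpl. reflexivity. }
      rewrite E, quad_conj. apply HX.
Qed.

Lemma density_CPTP n m Phi A : CPTP n m Phi -> density n A -> density m (Phi A).
Proof.
  intros [Hs [_ [_ [Ht Hp]]]] [[HAs HA] HAt]. split; [|rewrite Ht; auto].
  assert (HP := Hp 1%nat A Nat.lt_0_1). rewrite !Nat.mul_1_r in HP.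
  assert (Hb : block n 1 A 0 0 = A).
  { extensionality i; extensionality j. unfold block, inb.
    destruct (Nat.ltb_spec i n), (Nat.ltb_spec j n); simpl; rewrite ?Nat.mul_1_r, ?Nat.add_0_r; auto;
    symmetry; apply HAs; auto. }
  assert (Ha : ampl n m 1 Phi A = Phi A).
  { extensionality I; extensionality J. unfold ampl. rewrite !Nat.mod_1_r, !Nat.div_1_r, Hb, Nat.mul_1_r.
    unfold inb. destruct (Nat.ltb_spec I m), (Nat.ltb_spec J m); simpl; auto; symmetry; apply Hs; auto. }
  rewrite <- Ha. apply HP. split; auto.
Qed.

Definition bb (e I : nat) : nat := Nat.b2n (Nat.testbit I e).

Lemma bb_spec e I : bb e I = ((I / 2 ^ e) mod 2)%nat.
Proof. unfold bb. apply Nat.testbit_spec'. Qed.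
Lemma bb_le1 e I : (bb e I <= 1)%nat.
Proof. unfold bb. destruct (Nat.testbit I e); simpl; lia. Qed.
Lemma bb_mod e n I : (e < n)%nat -> bb e (I mod 2 ^ n) = bb e I.
Proof. intros. unfold bb. rewrite Nat.mod_pow2_bits_low; auto. Qed.
Lemma bb_pow e n : bb e (2 ^ n) = if Nat.eqb n e then 1%nat else 0%nat.
Proof. unfold bb. rewrite Nat.pow2_bits_eqb. destruct (n =? e); auto. Qed.
Lemma bb_0 e : bb e 0 = 0%nat.
Proof. unfold bb. rewrite Nat.bits_0. auto. Qed.
Lemma bb_top n I : (I < 2 ^ S n)%nat -> bb n I = (I / 2 ^ n)%nat.
Proof.
  intros. rewrite bb_spec. apply Nat.mod_small.
  apply Nat.Div0.div_lt_upper_bound. rewrite Nat.pow_succ_r' in H. lia.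
Qed.
Lemma bb_inj n a b : (a < 2 ^ n)%nat -> (b < 2 ^ n)%nat ->
  (forall e, (e < n)%nat -> bb e a = bb e b) -> a = b.
Proof.
  intros Ha Hb H. apply Nat.bits_inj_iff. intro e.
  destruct (Nat.lt_ge_cases e n).
  - specialize (H e H0). unfold bb in H. destruct (Nat.testbit a e), (Nat.testbit b e); simpl in H; auto; lia.
  - rewrite <- (Nat.mod_small a (2^n)) by auto. rewrite <- (Nat.mod_small b (2^n)) by auto.
    rewrite !Nat.mod_pow2_bits_high; auto.
Qed.

Lemma dimL_seq n s (g : nat -> Mat) : dimL (map (fun j => (2%nat, g j)) (seq s n)) = (2 ^ n)%nat.
Proof. revert s; induction n; intros; simpl; auto. Qed.

Lemma kronL_supported n s (g : nat -> Mat) : (forall t, supported 2 (g t)) ->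
  supported (2 ^ n) (kronL (map (fun j => (2%nat, g j)) (seq s n))).
Proof.
  revert s; induction n; intros s Hg I J HIJ; simpl.
  - unfold idm, inb. simpl in HIJ. destruct (Nat.eqb_spec I J); simpl; auto.
    subst. destruct HIJ; destruct (Nat.ltb_spec J 1); simpl; auto; lia.
  - unfold kron. rewrite dimL_seq.
    destruct HIJ as [H|H].
    + rewrite (Hg s). ring. left. apply Nat.div_le_lower_bound. apply Nat.pow_nonzero; lia.
      rewrite Nat.pow_succ_r' in H. lia.
    + rewrite (Hg s). ring. right. apply Nat.div_le_lower_bound. apply Nat.pow_nonzero; lia.
      rewrite Nat.pow_succ_r' in H. lia.
Qed.

Lemma kronL_entry n s (g : nat -> Mat) I J : (I < 2 ^ n)%nat -> (J < 2 ^ n)%nat ->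
  kronL (map (fun j => (2%nat, g j)) (seq s n)) I J =
  Cprod n (fun t => g (s + t)%nat (bb (n - 1 - t) I) (bb (n - 1 - t) J)).
Proof.
  revert s I J; induction n; intros s I J HI HJ.
  - simpl in *. unfold idm, inb. assert (I = 0%nat) by lia. assert (J = 0%nat) by lia. subst. reflexivity.
  - simpl (kronL _). unfold kron. rewrite dimL_seq. rewrite Cprod_shift.
    rewrite IHn by (apply Nat.mod_upper_bound; apply Nat.pow_nonzero; lia).
    f_equal.
    + rewrite Nat.add_0_r. replace (S n - 1 - 0)%nat with n by lia. rewrite !bb_top; auto.
    + apply Cprod_ext; intros t Ht. replace (S s + t)%nat with (s + S t)%nat by lia.
      replace (S n - 1 - S t)%nat with (n - 1 - t)%nat by lia.
      rewrite !bb_mod by lia. auto.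
Qed.

Lemma map_const_seq {A} (x : A) s n : map (fun _ => x) (seq s n) = repeat x n.
Proof. revert s; induction n; intros; simpl; auto. rewrite IHn; auto. Qed.

Lemma bits_differ n a b : (a < 2 ^ n)%nat -> (b < 2 ^ n)%nat -> a <> b ->
  exists t, (t < n)%nat /\ bb (n - 1 - t) a <> bb (n - 1 - t) b.
Proof.
  intros Ha Hb Hne. apply NNPP; intro H. apply Hne. apply (bb_inj n); auto.
  intros e He. apply NNPP; intro H2. apply H. exists (n - 1 - e)%nat. split. lia.
  replace (n - 1 - (n - 1 - e))%nat with e by lia. auto.
Qed.

Lemma pow2_pos d : (0 < 2 ^ d)%nat.
Proof. apply Nat.neq_0_lt_0, Nat.pow_nonzero; lia. Qed.

Lemma e_lt d c : (c < d)%nat -> (2 ^ (d - 1 - c) < 2 ^ d)%nat.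
Proof. intros. apply Nat.pow_lt_mono_r; lia. Qed.

Lemma bb_e d p q : (p < d)%nat -> (q < d)%nat ->
  bb (d - 1 - q) (2 ^ (d - 1 - p)) = if Nat.eqb q p then 1%nat else 0%nat.
Proof.
  intros. rewrite bb_pow. destruct (Nat.eqb_spec (d-1-p) (d-1-q)), (Nat.eqb_spec q p); auto; lia.
Qed.

Lemma bb01 e a : bb e a = 0%nat \/ bb e a = 1%nat.
Proof. pose proof (bb_le1 e a). lia. Qed.

Lemma flip_col0 d c a : (c < d)%nat -> (a < 2 ^ d)%nat ->
  flip d c a 0%nat = if Nat.eqb a (2 ^ (d - 1 - c)) then C1 else C0.
Proof.
  intros Hc Ha. unfold flip. rewrite kronL_entry; auto. 2: apply pow2_pos.
  destruct (Nat.eqb_spec a (2 ^ (d - 1 - c))).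
  - subst. apply Cprod_1. intros t Ht. simpl. rewrite bb_0, bb_e by auto.
    destruct (Nat.eqb_spec t c); reflexivity.
  - destruct (bits_differ d a (2 ^ (d - 1 - c))) as [t [Ht Hd]]; auto. apply e_lt; auto.
    apply (Cprod_0 d t); auto. simpl. rewrite bb_0. rewrite bb_e in Hd by auto.
    destruct (Nat.eqb_spec t c); destruct (bb01 (d - 1 - t) a) as [E|E]; rewrite E in *; try lia; reflexivity.
Qed.

Definition phase (d m0 c : nat) : Cplx := Cexpi (- (2 * PI * INR ((c + 1) * (m0 + 1)) / INR d)).

Lemma UD_col d m0 c t : (c < d)%nat ->
  UD d m0 t (2 ^ (d - 1 - c))%nat = if Nat.eqb t (2 ^ (d - 1 - c))%nat then phase d m0 c else C0.
Proof.
  intros Hc. unfold UD.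
  destruct (Nat.lt_ge_cases t (2 ^ d)).
  2:{ rewrite kronL_supported. destruct (Nat.eqb_spec t (2 ^ (d - 1 - c))); auto.
      pose proof (e_lt d c Hc); lia.
      intros j a b Hab. destruct Hab as [H1|H1];
      destruct (Nat.eqb_spec a 0), (Nat.eqb_spec b 0), (Nat.eqb_spec a 1), (Nat.eqb_spec b 1); simpl; auto; lia.
      left; auto. }
  rewrite kronL_entry; auto. 2: apply e_lt; auto.
  destruct (Nat.eqb_spec t (2 ^ (d - 1 - c))).
  - subst. rewrite (Cprod_delta d c) by auto. simpl. rewrite bb_e by auto. rewrite Nat.eqb_refl. simpl.
    rewrite Cprod_1. unfold phase. ring.
    intros i Hi. rewrite bb_e by auto. destruct (Nat.eqb_spec i c); auto.
  - destruct (bits_differ d t (2 ^ (d - 1 - c))) as [j [Hj Hd]]; auto. apply e_lt; auto.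
    apply (Cprod_0 d j); auto. simpl. rewrite bb_e in * by auto.
    destruct (Nat.eqb_spec j c); destruct (bb01 (d - 1 - j) t) as [E|E]; rewrite E in *; try lia; reflexivity.
Qed.

Lemma zeros_entry d a b : (a < 2 ^ d)%nat -> (b < 2 ^ d)%nat ->
  zeros d a b = if (Nat.eqb a 0 && Nat.eqb b 0)%bool then C1 else C0.
Proof.
  intros Ha Hb. unfold zeros. rewrite <- (map_const_seq _ 0 d).
  rewrite (kronL_entry d 0 (fun _ => projm 2 0)); auto.
  destruct (Nat.eqb_spec a 0), (Nat.eqb_spec b 0); simpl.
  - subst. apply Cprod_1. intros t Ht. rewrite bb_0. reflexivity.
  - destruct (bits_differ d b 0) as [j [Hj Hd]]; auto. apply pow2_pos.
    apply (Cprod_0 d j); auto. rewrite bb_0 in *. unfold projm.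
    destruct (bb01 (d-1-j) b) as [E|E]; rewrite E in *; try lia. rewrite Bool.andb_false_r. reflexivity.
  - destruct (bits_differ d a 0) as [j [Hj Hd]]; auto. apply pow2_pos.
    apply (Cprod_0 d j); auto. rewrite bb_0 in *. unfold projm.
    destruct (bb01 (d-1-j) a) as [E|E]; rewrite E in *; try lia. reflexivity.
  - destruct (bits_differ d a 0) as [j [Hj Hd]]; auto. apply pow2_pos.
    apply (Cprod_0 d j); auto. rewrite bb_0 in *. unfold projm.
    destruct (bb01 (d-1-j) a) as [E|E]; rewrite E in *; try lia. reflexivity.
Qed.

Lemma mm_conj N n M V A :
  mmul N (mmul N M (conj_map n V A)) (adj M) = conj_map n (mmul N M V) A.
Proof.
  extensionality I; extensionality J. unfold mmul, conj_map, adj.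
  transitivity (Csum N (fun L => Csum N (fun K => Csum n (fun i => Csum n (fun j =>
    Cmul (Cmul (Cmul (M I K) (V K i)) (A i j)) (Cconj (Cmul (M J L) (V L j)))))))).
  { apply Csum_ext; intros L _. rewrite <- Csum_mul_r. apply Csum_ext; intros K _.
    rewrite <- Csum_mul_l, <- Csum_mul_r. apply Csum_ext; intros i _.
    rewrite <- Csum_mul_l, <- Csum_mul_r. apply Csum_ext; intros j _.
    rewrite Cconj_mul. ring. }
  symmetry.
  transitivity (Csum n (fun i => Csum n (fun j => Csum N (fun L => Csum N (fun K =>
    Cmul (Cmul (Cmul (M I K) (V K i)) (A i j)) (Cconj (Cmul (M J L) (V L j)))))))).
  { apply Csum_ext; intros i _. apply Csum_ext; intros j _.
    rewrite Csum_conj, <- Csum_mul_l. apply Csum_ext; intros L _.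
    rewrite <- !Csum_mul_r. apply Csum_ext; intros K _. ring. }
  rewrite (Csum_ext n _ (fun i => Csum N (fun L => Csum n (fun j => Csum N (fun K =>
    Cmul (Cmul (Cmul (M I K) (V K i)) (A i j)) (Cconj (Cmul (M J L) (V L j)))))))).
  2:{ intros; rewrite Csum_swap; reflexivity. }
  rewrite Csum_swap. apply Csum_ext; intros L _.
  rewrite (Csum_ext n _ (fun i => Csum N (fun K => Csum n (fun j =>
    Cmul (Cmul (Cmul (M I K) (V K i)) (A i j)) (Cconj (Cmul (M J L) (V L j))))))).
  2:{ intros; rewrite Csum_swap; reflexivity. }
  rewrite Csum_swap. reflexivity.
Qed.

Lemma conj_map_ext n V W A : (forall I c, (c < n)%nat -> V I c = W I c) ->
  conj_map n V A = conj_map n W A.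
Proof.
  intros H. extensionality I; extensionality J. unfold conj_map.
  apply Csum_ext; intros i Hi; apply Csum_ext; intros j Hj. rewrite !H; auto.
Qed.

Definition V1 (d : nat) : Mat := fun I c =>
  if (Nat.eqb I (c * 2 ^ d + 2 ^ (d - 1 - c)) && Nat.ltb c d)%bool then C1 else C0.
Definition V2 (d : nat) : Mat := fun t c =>
  if (Nat.eqb t (2 ^ (d - 1 - c)) && Nat.ltb c d)%bool then C1 else C0.
Definition K0 (d : nat) : Mat := fun L c =>
  if (Nat.eqb L (c * 2 ^ d) && Nat.ltb c d)%bool then C1 else C0.

Lemma kron_zeros d A : supported d A -> kron (2 ^ d) A (zeros d) = conj_map d (K0 d) A.
Proof.
  intros HA. extensionality K; extensionality L. unfold kron, conj_map.
  pose proof (pow2_pos d) as HQ.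
  rewrite zeros_entry by (apply Nat.mod_upper_bound; lia).
  destruct (Nat.lt_ge_cases (K / 2 ^ d) d) as [HK|HK].
  2:{ rewrite HA by auto. rewrite Csum_0. ring. intros i Hi. apply Csum_0; intros j Hj.
      unfold K0. destruct (Nat.eqb_spec K (i * 2 ^ d)); simpl; try ring.
      subst. rewrite Nat.div_mul in HK by lia. lia. }
  destruct (Nat.lt_ge_cases (L / 2 ^ d) d) as [HL|HL].
  2:{ rewrite (HA (K / 2^d)%nat) by auto. rewrite Csum_0. ring. intros i Hi. apply Csum_0; intros j Hj.
      unfold K0. destruct (Nat.eqb_spec L (j * 2 ^ d)); simpl; try (rewrite Cconj0; ring).
      subst. rewrite Nat.div_mul in HL by lia. lia. }
  rewrite (Csum_delta d (K / 2 ^ d)); auto.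
  2:{ intros i Hi Hne. apply Csum_0; intros j Hj. unfold K0. destruct (Nat.eqb_spec K (i * 2 ^ d)); simpl; try ring.
      subst. rewrite Nat.div_mul in Hne by lia. lia. }
  rewrite (Csum_delta d (L / 2 ^ d)); auto.
  2:{ intros j Hj Hne. unfold K0. destruct (Nat.eqb_spec L (j * 2 ^ d)); simpl; try (rewrite Cconj0; ring).
      subst. rewrite Nat.div_mul in Hne by lia. lia. }
  unfold K0. rewrite (proj2 (Nat.ltb_lt _ _) HK), (proj2 (Nat.ltb_lt _ _) HL).
  rewrite !Bool.andb_true_r.
  pose proof (Nat.div_mod K (2^d)) as EK. pose proof (Nat.div_mod L (2^d)) as EL.
  destruct (Nat.eqb_spec (K mod 2 ^ d) 0), (Nat.eqb_spec (L mod 2 ^ d) 0);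
  destruct (Nat.eqb_spec K (K / 2 ^ d * 2 ^ d)), (Nat.eqb_spec L (L / 2 ^ d * 2 ^ d)); simpl;
  try rewrite Cconj0; try rewrite Cconj1; try ring; nia.
Qed.

Lemma UK0 d I c : (c < d)%nat -> mmul (d * 2 ^ d) (U_A d) (K0 d) I c = V1 d I c.
Proof.
  intros Hc. pose proof (pow2_pos d) as HQ. pose proof (e_lt d c Hc) as He.
  unfold mmul. rewrite (Csum_delta _ (c * 2 ^ d)).
  2:{ nia. }
  2:{ intros K HK Hne. unfold K0. destruct (Nat.eqb_spec K (c * 2 ^ d)); try lia. simpl. ring. }
  unfold K0. rewrite Nat.eqb_refl, (proj2 (Nat.ltb_lt _ _) Hc). simpl.
  unfold U_A, Msum, kron. rewrite Nat.div_mul, Nat.Div0.mod_mul by lia.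
  rewrite (Csum_delta d c); auto.
  2:{ intros i Hi Hne. unfold projm. destruct (Nat.eqb_spec c i); try lia. rewrite Bool.andb_false_r. simpl. ring. }
  rewrite flip_col0 by (auto; apply Nat.mod_upper_bound; lia).
  unfold projm, V1. rewrite Nat.eqb_refl, (proj2 (Nat.ltb_lt _ _) Hc). rewrite !Bool.andb_true_r.
  pose proof (Nat.div_mod I (2^d) ltac:(lia)) as EI. unfold inb. rewrite (proj2 (Nat.ltb_lt _ _) Hc), Bool.andb_true_r.
  destruct (Nat.eqb_spec (I / 2 ^ d) c) as [E1|E1], (Nat.eqb_spec (I mod 2 ^ d) (2 ^ (d - 1 - c))) as [E2|E2],
    (Nat.eqb_spec I (c * 2 ^ d + 2 ^ (d - 1 - c))) as [E3|E3]; simpl; try ring;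
  exfalso; first [apply E3; rewrite EI at 1; rewrite E1, E2; ring
                 | apply E2; rewrite E3; apply mod_mul_add; auto
                 | apply E1; rewrite E3; apply div_mul_add; auto].
Qed.

Lemma rho'_eq d A : supported d A -> rho' d A = conj_map d (V1 d) A.
Proof.
  intros HA. unfold rho'. rewrite kron_zeros by auto. rewrite mm_conj.
  apply conj_map_ext. intros; apply UK0; auto.
Qed.

Lemma iso_V1 d : isometry (d * 2 ^ d) d (V1 d).
Proof.
  pose proof (pow2_pos d) as HQ. split.
  - intros I i H. unfold V1. destruct (Nat.ltb_spec i d); [|rewrite Bool.andb_false_r; auto].
    destruct (Nat.eqb_spec I (i * 2 ^ d + 2 ^ (d - 1 - i))); simpl; auto.
    pose proof (e_lt d i H0). nia.
  - intros i j Hi Hj. rewrite (Csum_delta _ (i * 2 ^ d + 2 ^ (d - 1 - i))).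
    + unfold V1. rewrite Nat.eqb_refl, (proj2 (Nat.ltb_lt _ _) Hi), (proj2 (Nat.ltb_lt _ _) Hj). simpl.
      destruct (Nat.eqb_spec (i * 2 ^ d + 2 ^ (d - 1 - i)) (j * 2 ^ d + 2 ^ (d - 1 - j))) as [E|E];
      destruct (Nat.eqb_spec i j) as [F|F]; simpl; try rewrite Cconj1; try ring.
      * exfalso. apply F. pose proof (e_lt d i Hi). pose proof (e_lt d j Hj).
        rewrite <- (div_mul_add i (2^d) (2 ^ (d - 1 - i))), E by auto. apply div_mul_add; auto.
      * subst. lia.
    + pose proof (e_lt d i Hi). nia.
    + intros I HI Hne. unfold V1. destruct (Nat.eqb_spec I (i * 2 ^ d + 2 ^ (d - 1 - i))); try lia.
      simpl. rewrite Cconj0. ring.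
Qed.

Lemma iso_V2 d : isometry (2 ^ d) d (V2 d).
Proof.
  split.
  - intros I i H. unfold V2. destruct (Nat.ltb_spec i d); [|rewrite Bool.andb_false_r; auto].
    destruct (Nat.eqb_spec I (2 ^ (d - 1 - i))); simpl; auto.
    pose proof (e_lt d i H0). lia.
  - intros i j Hi Hj. rewrite (Csum_delta _ (2 ^ (d - 1 - i))).
    + unfold V2. rewrite Nat.eqb_refl, (proj2 (Nat.ltb_lt _ _) Hi), (proj2 (Nat.ltb_lt _ _) Hj). simpl.
      destruct (Nat.eqb_spec (2 ^ (d - 1 - i)) (2 ^ (d - 1 - j))) as [E|E];
      destruct (Nat.eqb_spec i j) as [F|F]; simpl; try rewrite Cconj1; try ring.
      * exfalso. apply F. apply Nat.pow_inj_r in E; lia.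
      * subst. lia.
    + apply e_lt; auto.
    + intros I HI Hne. unfold V2. destruct (Nat.eqb_spec I (2 ^ (d - 1 - i))); try lia.
      simpl. rewrite Cconj0. ring.
Qed.

Section Delta.
Variable d : nat.
Let Q := (2 ^ d)%nat.
Let N := (d * 2 ^ d)%nat.
Let F1 := kron Q (Fmat d) (idm Q).
Let G := mmul N F1 (V1 d).
Definition Hm (G : Mat) (m0 : nat) : Mat := fun s c => if inb (2 ^ d) s then G (m0 * 2 ^ d + s)%nat c else C0.

Lemma pt_conj m0 A : (m0 < d)%nat ->
  ptrace1 d Q (mmul N (kron Q (projm d m0) (idm Q)) (conj_map d G A)) = conj_map d (Hm G m0) A.
Proof.
  intros Hm0. pose proof (pow2_pos d) as HQ. unfold Q, N in *.
  extensionality s; extensionality s'. unfold ptrace1, Hm, inb.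
  destruct (Nat.ltb_spec s (2 ^ d)) as [Hs|Hs]; simpl.
  2:{ unfold conj_map. rewrite Csum_0; auto. intros; apply Csum_0; intros. rewrite (proj2 (Nat.ltb_ge _ _) Hs). ring. }
  destruct (Nat.ltb_spec s' (2 ^ d)) as [Hs'|Hs']; simpl.
  2:{ unfold conj_map. rewrite Csum_0; auto. intros; apply Csum_0; intros. rewrite (proj2 (Nat.ltb_ge _ _) Hs'). rewrite Cconj0. ring. }
  rewrite (Csum_delta d m0); auto.
  2:{ intros a Ha Hne. unfold mmul. apply Csum_0; intros K HK. unfold kron, projm.
      rewrite div_mul_add by auto. destruct (Nat.eqb_spec a m0); try lia. simpl. ring. }
  unfold mmul. rewrite (Csum_delta _ (m0 * 2 ^ d + s)%nat).
  - unfold kron, projm, idm, inb. rewrite !div_mul_add, !mod_mul_add by auto.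
    rewrite Nat.eqb_refl, (proj2 (Nat.ltb_lt _ _) Hm0), (proj2 (Nat.ltb_lt _ _) Hs). simpl.
    unfold conj_map. rewrite <- Csum_mul_l. apply Csum_ext; intros. rewrite <- Csum_mul_l. apply Csum_ext; intros. rewrite (proj2 (Nat.ltb_lt _ _) Hs), (proj2 (Nat.ltb_lt _ _) Hs'), Nat.eqb_refl. simpl. ring.
  - nia.
  - intros K HK Hne. unfold kron, projm, idm, inb. rewrite !div_mul_add, !mod_mul_add by auto.
    pose proof (Nat.div_mod K (2^d) ltac:(lia)) as EK.
    destruct (Nat.eqb_spec (K / 2 ^ d) m0) as [E1|E1]; destruct (Nat.eqb_spec s (K mod 2 ^ d)) as [E2|E2];
      simpl; rewrite ?Bool.andb_false_r; simpl; try ring.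
    exfalso. apply Hne. rewrite EK at 1. rewrite E1, <- E2. ring.
Qed.

Lemma Cexpi_neg_mul x : Cmul (Cexpi (- x)) (Cexpi x) = C1.
Proof. apply Ceq; simpl; rewrite cos_neg, sin_neg. pose proof (sin2_cos2 x). unfold Rsqr in H. lra. lra. Qed.

Lemma G_val m0 s c : (m0 < d)%nat -> (s < Q)%nat -> (c < d)%nat ->
  G (m0 * Q + s)%nat c = if Nat.eqb s (2 ^ (d - 1 - c)) then Fmat d m0 c else C0.
Proof.
  intros Hm0 Hs Hc. pose proof (pow2_pos d) as HQ. pose proof (e_lt d c Hc) as He. unfold G, Q, N in *.
  unfold mmul. rewrite (Csum_delta _ (c * 2 ^ d + 2 ^ (d - 1 - c))%nat).
  - unfold V1, F1, kron, idm, inb. rewrite Nat.eqb_refl, (proj2 (Nat.ltb_lt _ _) Hc).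
    rewrite !div_mul_add, !mod_mul_add by auto. rewrite (proj2 (Nat.ltb_lt _ _) Hs).
    destruct (Nat.eqb_spec s (2 ^ (d - 1 - c))); simpl; ring.
  - nia.
  - intros K HK Hne. unfold V1. destruct (Nat.eqb_spec K (c * 2 ^ d + 2 ^ (d - 1 - c))); try lia. simpl. ring.
Qed.

Lemma UDH m0 t c : (m0 < d)%nat ->
  mmul Q (UD d m0) (Hm G m0) t c = Cmul (RtoC (/ sqrt (INR d))) (V2 d t c).
Proof.
  intros Hm0. pose proof (pow2_pos d) as HQ. unfold mmul. unfold Q in *.
  destruct (Nat.lt_ge_cases c d) as [Hc|Hc].
  2:{ unfold V2. rewrite (proj2 (Nat.ltb_ge _ _) Hc), Bool.andb_false_r. rewrite Csum_0. ring.
      intros s Hs. unfold Hm, G, mmul. rewrite Csum_0. destruct (inb (2^d) s); ring.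
      intros K HK. unfold V1. rewrite (proj2 (Nat.ltb_ge _ _) Hc), Bool.andb_false_r. ring. }
  pose proof (e_lt d c Hc) as He.
  rewrite (Csum_delta _ (2 ^ (d - 1 - c))%nat); auto.
  2:{ intros s Hs Hne. unfold Hm, inb. rewrite (proj2 (Nat.ltb_lt _ _) Hs).
      rewrite G_val by auto. destruct (Nat.eqb_spec s (2 ^ (d - 1 - c))); try lia. ring. }
  unfold Hm, inb. rewrite (proj2 (Nat.ltb_lt _ _) He). rewrite G_val by auto.
  rewrite Nat.eqb_refl. rewrite UD_col by auto. unfold V2.
  rewrite (proj2 (Nat.ltb_lt _ _) Hc), Bool.andb_true_r.
  destruct (Nat.eqb_spec t (2 ^ (d - 1 - c))); [|ring].
  unfold Fmat, inb. rewrite (proj2 (Nat.ltb_lt _ _) Hc), (proj2 (Nat.ltb_lt _ _) Hm0). simpl.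
  unfold phase.
  transitivity (Cmul (RtoC (/ sqrt (INR d))) (Cmul (Cexpi (- (2 * PI * INR ((c + 1) * (m0 + 1)) / INR d)))
     (Cexpi (2 * PI * INR ((c + 1) * (m0 + 1)) / INR d)))). ring.
  rewrite Cexpi_neg_mul. ring.
Qed.

End Delta.

Lemma Csum_const n c : Csum n (fun _ => c) = Cmul (RtoC (INR n)) c.
Proof.
  induction n; simpl Csum. apply Ceq; simpl; ring.
  rewrite IHn, S_INR. apply Ceq; simpl; ring.
Qed.

Lemma Delta_eq d A : (1 <= d)%nat -> supported d A ->
  Delta_map d (rho' d A) = conj_map d (V2 d) A.
Proof.
  intros Hd HA. rewrite rho'_eq by auto. unfold Delta_map. rewrite mm_conj.
  extensionality t; extensionality t'. unfold Msum.
  rewrite (Csum_ext d _ (fun m0 => Cmul (RtoC (/ INR d)) (conj_map d (V2 d) A t t'))).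
  - rewrite Csum_const. assert (INR d <> 0) by (apply not_0_INR; lia).
    transitivity (Cmul (RtoC (INR d * / INR d)) (conj_map d (V2 d) A t t')).
    apply Ceq; simpl; ring. rewrite Rinv_r by auto. apply Ceq; simpl; ring.
  - intros m0 Hm0. rewrite pt_conj by auto. rewrite mm_conj.
    rewrite (conj_map_ext d _ (fun t c => Cmul (RtoC (/ sqrt (INR d))) (V2 d t c))).
    2:{ intros; apply UDH; auto. }
    unfold conj_map. rewrite <- Csum_mul_l. apply Csum_ext; intros. rewrite <- Csum_mul_l. apply Csum_ext; intros.
    assert (Hs : / sqrt (INR d) * / sqrt (INR d) = / INR d).
    { rewrite <- Rinv_mult, sqrt_sqrt; auto. apply pos_INR. }
    rewrite !Cconj_mul, Cconj_RtoC.
    transitivity (Cmul (RtoC (/ sqrt (INR d) * / sqrt (INR d))) (Cmul (Cmul (V2 d t i) (A i i0)) (Cconj (V2 d t' i0)))).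
    apply Ceq; simpl; ring. rewrite Hs. reflexivity.
Qed.

Lemma skipn_repeat {A} (x : A) k n : skipn k (repeat x n) = repeat x (n - k).
Proof. revert n; induction k; intros n; simpl. rewrite Nat.sub_0_r; auto. destruct n; simpl; auto. Qed.
Lemma nth_repeat_lt {A} (x y : A) q n : (q < n)%nat -> nth q (repeat x n) y = x.
Proof. revert q; induction n; intros q H; [lia|]. destruct q; simpl; auto. apply IHn; lia. Qed.
Lemma dimprod_rep n : dimprod (repeat 2%nat n) = (2 ^ n)%nat.
Proof. induction n; simpl; auto. Qed.

Lemma digit_qubits d p I : (p < d)%nat -> digit (qubits d) p I = bb (d - 1 - p) I.
Proof.
  intros. unfold digit, qubits. rewrite skipn_repeat, dimprod_rep, nth_repeat_lt by auto.
  rewrite bb_spec. f_equal. f_equal. f_equal. lia.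
Qed.
Lemma digit_qq0 d I : digit (qudit_qubits d) 0 I = ((I / 2 ^ d) mod d)%nat.
Proof. unfold digit, qudit_qubits, qubits. simpl. rewrite dimprod_rep. auto. Qed.
Lemma digit_qqS d q I : (q < d)%nat -> digit (qudit_qubits d) (S q) I = bb (d - 1 - q) I.
Proof. intros. unfold qudit_qubits. unfold digit. simpl skipn. simpl nth. apply digit_qubits; auto. Qed.
Lemma dimprod_qq d : dimprod (qudit_qubits d) = (d * 2 ^ d)%nat.
Proof. unfold qudit_qubits, qubits, dimprod. simpl. fold (dimprod (repeat 2%nat d)). rewrite dimprod_rep; auto. Qed.

Lemma filter_single (l : list nat) y f : NoDup l -> (forall p, f p = true -> p = y) ->
  (length (filter f l) <= 1)%nat.
Proof.
  intros Hl Hf. pose proof (NoDup_filter f Hl) as Hn.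
  assert (Hall : forall p, In p (filter f l) -> p = y).
  { intros p Hp. apply filter_In in Hp. apply Hf; tauto. }
  destruct (filter f l) as [|a [|b r]]; simpl; try lia.
  exfalso. inversion Hn; subst. apply H1. left. rewrite (Hall a), (Hall b); simpl; auto.
Qed.

Lemma filter_map_len {A B} (f : B -> bool) (g : A -> B) l :
  length (filter f (map g l)) = length (filter (fun x => f (g x)) l).
Proof. induction l; simpl; auto. destruct (f (g a)); simpl; auto. Qed.

Lemma forallb_false {A} (f : A -> bool) l x : In x l -> f x = false -> forallb f l = false.
Proof.
  intros Hx Hf. destruct (forallb f l) eqn:E; auto. rewrite forallb_forall in E.
  rewrite E in Hf; auto.
Qed.

Definition Vv (n : nat) (V : Mat) (psi : Vec) : Vec := fun I => Csum n (fun c => Cmul (V I c) (psi c)).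

Lemma conj_map_outer n V psi : conj_map n V (outer psi) = outer (Vv n V psi).
Proof.
  extensionality I; extensionality J. unfold conj_map, outer, Vv.
  rewrite Csum_conj, <- Csum_mul_r. apply Csum_ext; intros i _. rewrite <- Csum_mul_l.
  apply Csum_ext; intros j _. rewrite Cconj_mul. ring.
Qed.

Lemma conj_map_Msum n V L (p : nat -> R) (psi : nat -> Vec) :
  conj_map n V (Msum L (fun l => mscale (RtoC (p l)) (outer (psi l)))) =
  Msum L (fun l => mscale (RtoC (p l)) (outer (Vv n V (psi l)))).
Proof.
  extensionality I; extensionality J. unfold Msum, mscale.
  rewrite (Csum_ext L (fun l => Cmul (RtoC (p l)) (outer (Vv n V (psi l)) I J))
     (fun l => Cmul (RtoC (p l)) (conj_map n V (outer (psi l)) I J))).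
  2:{ intros; rewrite conj_map_outer; reflexivity. }
  unfold conj_map.
  transitivity (Csum n (fun i => Csum n (fun j => Csum L (fun l =>
     Cmul (RtoC (p l)) (Cmul (Cmul (V I i) (outer (psi l) i j)) (Cconj (V J j))))))).
  { apply Csum_ext; intros; apply Csum_ext; intros. rewrite <- Csum_mul_l, <- Csum_mul_r.
    apply Csum_ext; intros. ring. }
  rewrite (Csum_ext n _ (fun i => Csum L (fun l => Csum n (fun j =>
     Cmul (RtoC (p l)) (Cmul (Cmul (V I i) (outer (psi l) i j)) (Cconj (V J j))))))).
  2:{ intros; rewrite Csum_swap; reflexivity. }
  rewrite Csum_swap. apply Csum_ext; intros l _.
  rewrite <- Csum_mul_l. apply Csum_ext; intros. rewrite <- Csum_mul_l. reflexivity.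
Qed.

Lemma Cnorm2_re a : Cnorm2 a = re (Cmul (Cconj a) a).
Proof. unfold Cnorm2; simpl; ring. Qed.

Lemma vnorm2_C n v : RtoC (vnorm2 n v) = Csum n (fun i => Cmul (Cconj (v i)) (v i)).
Proof.
  unfold vnorm2. induction n; simpl. reflexivity.
  rewrite <- IHn. apply Ceq; unfold Cnorm2; simpl; ring.
Qed.

Lemma unitV_iso m n V psi : isometry m n V -> unitV n psi -> unitV m (Vv n V psi).
Proof.
  intros [Hs Hu] [Hps Hn]. split.
  - intros I HI. unfold Vv. apply Csum_0; intros. rewrite Hs; auto. ring.
  - assert (RtoC (vnorm2 m (Vv n V psi)) = RtoC (vnorm2 n psi)).
    { rewrite !vnorm2_C. unfold Vv.
      transitivity (Csum m (fun I => Csum n (fun i => Csum n (fun j =>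
        Cmul (Cmul (Cconj (psi i)) (psi j)) (Cmul (Cconj (V I i)) (V I j)))))).
      { apply Csum_ext; intros. rewrite Csum_conj, <- Csum_mul_r. apply Csum_ext; intros.
        rewrite <- Csum_mul_l. apply Csum_ext; intros. rewrite Cconj_mul. ring. }
      rewrite Csum_swap. apply Csum_ext; intros i Hi. rewrite Csum_swap.
      rewrite (Csum_delta n i); auto.
      - rewrite Csum_mul_l, Hu, Nat.eqb_refl; auto. ring.
      - intros j Hj Hne. rewrite Csum_mul_l, Hu; auto. destruct (Nat.eqb_spec i j); try lia. ring. }
    injection H as H. congruence.
Qed.

Lemma inf_ex (S : R -> Prop) : (exists x, S x) -> (forall x, S x -> 0 <= x) -> is_inf S (Rinf S).
Proof.
  intros [x0 Hx0] Hlb. unfold Rinf. apply epsilon_spec.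
  set (T := fun y => S (- y)).
  destruct (completeness T) as [m [Hm1 Hm2]].
  - exists 0. intros y Hy. apply Hlb in Hy. lra.
  - exists (- x0). unfold T. rewrite Ropp_involutive. auto.
  - exists (- m). split.
    + intros x Hx. assert (T (- x)) by (unfold T; rewrite Ropp_involutive; auto).
      apply Hm1 in H. lra.
    + intros b Hb. assert (m <= - b). { apply Hm2. intros y Hy. apply Hb in Hy. lra. } lra.
Qed.

Lemma inf_compare (SC SE : R -> Prop) :
  (exists x, SC x) -> (forall x, SC x -> 0 <= x) ->
  (exists x, SE x) -> (forall x, SE x -> 0 <= x) ->
  (forall x, SC x -> exists y, SE y /\ y <= x) -> Rinf SE <= Rinf SC.
Proof.
  intros H1 H2 H3 H4 H5. pose proof (inf_ex SC H1 H2) as [_ C2]. pose proof (inf_ex SE H3 H4) as [E1 _].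
  apply C2. intros x Hx. destruct (H5 x Hx) as [y [Hy Hyx]]. apply E1 in Hy. lra.
Qed.

Definition inS (psi : Vec) (c : nat) : bool := if Ceq_dec (psi c) C0 then false else true.
Definition matchS (psi : Vec) (d x I : nat) : bool :=
  forallb (fun c => orb (negb (inS psi c)) (Nat.eqb (bb (d - 1 - c) I) (if Nat.eqb c x then 1%nat else 0%nat))) (seq 0 d).

Lemma forallb_ext_in' {A} (f g : A -> bool) l : (forall a, In a l -> f a = g a) -> forallb f l = forallb g l.
Proof. induction l; simpl; intros; auto. rewrite H, IHl; auto. Qed.

Lemma matchS_ext psi d x I J : (forall c, (c < d)%nat -> inS psi c = true -> bb (d - 1 - c) I = bb (d - 1 - c) J) ->
  matchS psi d x I = matchS psi d x J.
Proof.
  intros H. unfold matchS. apply forallb_ext_in'. intros c Hc. apply in_seq in Hc.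
  destruct (inS psi c) eqn:E; simpl; auto. rewrite H; auto. lia.
Qed.

Lemma matchS_true psi d x I : (forall c, (c < d)%nat -> inS psi c = true -> bb (d - 1 - c) I = if Nat.eqb c x then 1%nat else 0%nat) ->
  matchS psi d x I = true.
Proof.
  intros H. unfold matchS. apply forallb_forall. intros c Hc. apply in_seq in Hc.
  destruct (inS psi c) eqn:E; simpl; auto. rewrite H; auto. apply Nat.eqb_refl. lia.
Qed.

Lemma matchS_false psi d x I c : (c < d)%nat -> inS psi c = true -> bb (d - 1 - c) I <> (if Nat.eqb c x then 1%nat else 0%nat) ->
  matchS psi d x I = false.
Proof.
  intros Hc Hi H. unfold matchS. apply (forallb_false _ _ c). apply in_seq; lia.
  rewrite Hi. simpl. apply Nat.eqb_neq; auto.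
Qed.

Lemma inS_false psi c : inS psi c = false -> psi c = C0.
Proof. unfold inS. destruct (Ceq_dec (psi c) C0); auto; discriminate. Qed.
Lemma inS_true psi c : psi c = C0 -> inS psi c = false.
Proof. unfold inS. destruct (Ceq_dec (psi c) C0); auto; contradiction. Qed.

Lemma V1_val d psi I : (I < d * 2 ^ d)%nat ->
  Vv d (V1 d) psi I = if Nat.eqb (I mod 2 ^ d) (2 ^ (d - 1 - I / 2 ^ d)) then psi (I / 2 ^ d)%nat else C0.
Proof.
  intros HI. pose proof (pow2_pos d) as HQ.
  assert (Hx : (I / 2 ^ d < d)%nat) by (apply Nat.Div0.div_lt_upper_bound; lia).
  pose proof (Nat.div_mod I (2^d) ltac:(lia)) as EI.
  unfold Vv. rewrite (Csum_delta d (I / 2 ^ d)); auto.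
  - unfold V1. rewrite (proj2 (Nat.ltb_lt _ _) Hx), Bool.andb_true_r.
    destruct (Nat.eqb_spec I (I / 2 ^ d * 2 ^ d + 2 ^ (d - 1 - I / 2 ^ d))) as [E|E];
    destruct (Nat.eqb_spec (I mod 2 ^ d) (2 ^ (d - 1 - I / 2 ^ d))) as [F|F]; try ring.
    + exfalso. apply F. rewrite E at 1. apply mod_mul_add, e_lt; auto.
    + exfalso. apply E. rewrite EI at 1. rewrite F. ring.
  - intros c Hc Hne. unfold V1. destruct (Nat.eqb_spec I (c * 2 ^ d + 2 ^ (d - 1 - c))) as [E|E]; simpl; [|ring].
    exfalso. apply Hne. rewrite E. symmetry. apply div_mul_add, e_lt; auto.
Qed.

Lemma kprod1 d k psi : unitV d psi -> (CR d psi <= k - 1)%nat -> (1 <= k)%nat ->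
  kprod_pure (qudit_qubits d) k (Vv d (V1 d) psi).
Proof.
  intros Hu HCR Hk. unfold kprod_pure. cbv zeta. rewrite dimprod_qq.
  replace (length (qudit_qubits d)) with (S d) by (unfold qudit_qubits, qubits; simpl; rewrite repeat_length; auto).
  split; [apply unitV_iso; auto; apply iso_V1|].
  pose proof (pow2_pos d) as HQ.
  exists (fun p => match p with O => O | S q => if inS psi q then O else S q end).
  exists (fun b I => match b with
            | O => if matchS psi d ((I / 2 ^ d) mod d) I then psi ((I / 2 ^ d) mod d)%nat else C0
            | S q => if inS psi q then C1 else if Nat.eqb (bb (d - 1 - q) I) 0 then C1 else C0 end).
  split; [|split; [|split]].
  - intros [|q] Hp; auto. destruct (inS psi q); lia.
  - intros [|q] Hb.
    + simpl. rewrite <- seq_shift, filter_map_len.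
      rewrite (filter_ext _ (inS psi)). unfold CR in HCR. fold (inS psi) in HCR.
      * replace (fun i : nat => if Ceq_dec (psi i) C0 then false else true) with (inS psi) in HCR by reflexivity. simpl. lia.
      * intros q. destruct (inS psi q); auto.
    + apply Nat.le_trans with 1%nat; [|lia]. apply (filter_single _ (S q)). apply seq_NoDup.
      intros [|p] H; simpl in H; [discriminate|]. destruct (inS psi p); [discriminate|].
      apply Nat.eqb_eq in H. auto.
  - intros [|q] I J Hb HI HJ Hdig.
    + assert (E0 : ((I / 2 ^ d) mod d = (J / 2 ^ d) mod d)%nat).
      { rewrite <- !digit_qq0. apply Hdig; auto; lia. }
      rewrite E0. rewrite (matchS_ext psi d _ I J); auto.
      intros c Hc Hin. rewrite <- !digit_qqS by auto. apply Hdig; try lia. simpl. rewrite Hin. auto.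
    + simpl. destruct (inS psi q) eqn:E; auto.
      rewrite <- !digit_qqS by lia. rewrite (Hdig (S q)); auto. rewrite E; auto.
  - intros I HI. rewrite V1_val by auto. rewrite Cprod_shift.
    assert (Hx : (I / 2 ^ d < d)%nat) by (apply Nat.Div0.div_lt_upper_bound; lia).
    rewrite (Nat.mod_small (I / 2 ^ d)) by auto.
    set (x := (I / 2 ^ d)%nat) in *.
    assert (Hr : (I mod 2 ^ d < 2 ^ d)%nat) by (apply Nat.mod_upper_bound; lia).
    assert (Hbb : forall c, (c < d)%nat -> bb (d - 1 - c) I = bb (d - 1 - c) (I mod 2 ^ d)).
    { intros. rewrite bb_mod; auto. lia. }
    destruct (inS psi x) eqn:Ex.
    2:{ rewrite (inS_false _ _ Ex). destruct (Nat.eqb (I mod 2 ^ d) _), (matchS psi d x I); ring. }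
    destruct (Nat.eqb_spec (I mod 2 ^ d) (2 ^ (d - 1 - x))) as [Er|Er].
    + rewrite matchS_true. rewrite Cprod_1. ring.
      * intros q Hq. destruct (inS psi q) eqn:Eq; auto.
        rewrite Hbb, Er, bb_e by auto. destruct (Nat.eqb_spec q x); [subst; congruence|]. reflexivity.
      * intros c Hc _. rewrite Hbb, Er, bb_e by auto. reflexivity.
    + destruct (bits_differ d (I mod 2 ^ d) (2 ^ (d - 1 - x))) as [t [Ht Hdt]]; auto. apply e_lt; auto.
      rewrite bb_e in Hdt by auto.
      destruct (inS psi t) eqn:Et.
      * rewrite (matchS_false psi d x I t); auto. ring. rewrite Hbb; auto.
      * rewrite (Cprod_0 d t); auto. ring. rewrite Et.
        destruct (Nat.eqb_spec t x); [subst; congruence|].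
        rewrite Hbb by auto. destruct (bb01 (d - 1 - t) (I mod 2 ^ d)) as [B|B]; rewrite B in *; try lia. reflexivity.
Qed.

Lemma bb_inj_rev d a b : (a < 2 ^ d)%nat -> (b < 2 ^ d)%nat ->
  (forall c, (c < d)%nat -> bb (d - 1 - c) a = bb (d - 1 - c) b) -> a = b.
Proof.
  intros Ha Hb H. apply (bb_inj d); auto. intros e He.
  replace e with (d - 1 - (d - 1 - e))%nat by lia. apply H. lia.
Qed.

Lemma matchS_true_inv psi d x I : matchS psi d x I = true ->
  forall c, (c < d)%nat -> inS psi c = true -> bb (d - 1 - c) I = if Nat.eqb c x then 1%nat else 0%nat.
Proof.
  intros H c Hc Hi. unfold matchS in H. rewrite forallb_forall in H.
  specialize (H c (proj2 (in_seq d 0 c) ltac:(lia))). rewrite Hi in H. simpl in H.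
  apply Nat.eqb_eq; auto.
Qed.

Lemma V2_hit d psi x : (x < d)%nat -> Vv d (V2 d) psi (2 ^ (d - 1 - x))%nat = psi x.
Proof.
  intros Hx. unfold Vv. rewrite (Csum_delta d x); auto.
  - unfold V2. rewrite Nat.eqb_refl, (proj2 (Nat.ltb_lt _ _) Hx). simpl. ring.
  - intros c Hc Hne. unfold V2. destruct (Nat.eqb_spec (2 ^ (d - 1 - x)) (2 ^ (d - 1 - c))) as [E|E]; simpl; [|ring].
    apply Nat.pow_inj_r in E; lia.
Qed.

Lemma V2_miss d psi I : (forall c, (c < d)%nat -> I <> (2 ^ (d - 1 - c))%nat) -> Vv d (V2 d) psi I = C0.
Proof.
  intros H. unfold Vv. apply Csum_0. intros c Hc. unfold V2.
  destruct (Nat.eqb_spec I (2 ^ (d - 1 - c))) as [E|E]; simpl; [|ring]. exfalso; apply (H c); auto.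
Qed.

Lemma exists_inS d psi : unitV d psi -> exists c0, (c0 < d)%nat /\ inS psi c0 = true.
Proof.
  intros [_ Hn]. apply NNPP; intro H. assert (vnorm2 d psi = 0).
  { unfold vnorm2. apply Rsum_0. intros i Hi. destruct (inS psi i) eqn:E.
    - exfalso; apply H; eauto.
    - rewrite (inS_false _ _ E). unfold Cnorm2; simpl; ring. }
  lra.
Qed.

Lemma kprod2 d k psi : unitV d psi -> (CR d psi <= k - 1)%nat -> (2 <= k)%nat ->
  kprod_pure (qubits d) (k - 1) (Vv d (V2 d) psi).
Proof.
  intros Hu HCR Hk. unfold kprod_pure. cbv zeta. unfold qubits at 1. rewrite dimprod_rep.
  replace (length (qubits d)) with d by (unfold qubits; rewrite repeat_length; auto).
  split; [apply unitV_iso; auto; apply iso_V2|].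
  destruct (exists_inS d psi Hu) as [c0 [Hc0 Hic0]].
  exists (fun p => if inS psi p then c0 else p).
  exists (fun b I => if Nat.eqb b c0 then Csum d (fun c => if (inS psi c && matchS psi d c I)%bool then psi c else C0)
            else if inS psi b then C1 else if Nat.eqb (bb (d - 1 - b) I) 0 then C1 else C0).
  split; [|split; [|split]].
  - intros p Hp. destruct (inS psi p); auto.
  - intros b Hb. destruct (Nat.eqb_spec b c0) as [Eb|Eb].
    + subst b. rewrite (filter_ext _ (inS psi)).
      * unfold CR in HCR. exact HCR.
      * intros p. destruct (inS psi p) eqn:E. apply Nat.eqb_refl.
        apply Nat.eqb_neq. intro; subst; congruence.
    + apply Nat.le_trans with 1%nat; [|lia]. apply (filter_single _ b). apply seq_NoDup.
      intros p H. destruct (inS psi p); apply Nat.eqb_eq in H; congruence.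
  - intros b I J Hb HI HJ Hdig. destruct (Nat.eqb_spec b c0) as [Eb|Eb].
    + apply Csum_ext. intros c Hc. rewrite (matchS_ext psi d c I J); auto.
      intros c' Hc' Hin. rewrite <- !digit_qubits by auto. apply Hdig; auto. rewrite Hin; auto.
    + destruct (inS psi b) eqn:E; auto.
      rewrite <- !digit_qubits by auto. rewrite (Hdig b); auto. rewrite E; auto.
  - intros I HI. unfold qubits in HI. rewrite dimprod_rep in HI. rewrite (Cprod_delta d c0) by auto. rewrite Nat.eqb_refl.
    destruct (classic (exists t, (t < d)%nat /\ inS psi t = false /\ bb (d - 1 - t) I = 1%nat)) as [[t [Ht [Et Bt]]]|NA].
    + rewrite (Cprod_0 d t); auto.
      2:{ destruct (Nat.eqb_spec t c0); [subst; congruence|]. rewrite Et, Bt. reflexivity. }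
      destruct (classic (exists x, (x < d)%nat /\ I = (2 ^ (d - 1 - x))%nat)) as [[x [Hx Ex]]|NH].
      * subst I. rewrite V2_hit by auto. rewrite bb_e in Bt by auto.
        destruct (Nat.eqb_spec t x); try discriminate. subst. rewrite (inS_false _ _ Et). ring.
      * rewrite V2_miss. ring. intros c Hc E. apply NH; eauto.
    + assert (B : forall t, (t < d)%nat -> inS psi t = false -> bb (d - 1 - t) I = 0%nat).
      { intros t Ht Et. destruct (bb01 (d - 1 - t) I); auto. exfalso; apply NA; eauto. }
      rewrite Cprod_1.
      2:{ intros b Hb. destruct (Nat.eqb_spec b c0); auto. destruct (inS psi b) eqn:E; auto.
          rewrite B; auto. }
      destruct (classic (exists x, (x < d)%nat /\ I = (2 ^ (d - 1 - x))%nat)) as [[x [Hx Ex]]|NH].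
      * subst I. rewrite V2_hit by auto.
        assert (Ix : inS psi x = true).
        { destruct (inS psi x) eqn:E; auto. specialize (B x Hx E). rewrite bb_e, Nat.eqb_refl in B by auto. discriminate. }
        rewrite (Csum_delta d x); auto.
        -- rewrite Ix, matchS_true. simpl. ring. intros c Hc _. apply bb_e; auto.
        -- intros c Hc Hne. destruct (inS psi c) eqn:Ec; simpl; [|ring].
           rewrite (matchS_false psi d c _ c); auto. rewrite Nat.eqb_refl, bb_e by auto.
           destruct (Nat.eqb_spec c x); [lia|]. lia.
      * rewrite V2_miss. 2:{ intros c Hc E. apply NH; eauto. }
        rewrite Csum_0. ring. intros c Hc. destruct (inS psi c && matchS psi d c I)%bool eqn:E; [|reflexivity].
        exfalso. apply andb_prop in E. destruct E as [Ec Em]. apply NH. exists c. split; auto.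
        apply (bb_inj_rev d); auto. apply e_lt; auto. intros c' Hc'.
        rewrite bb_e by auto. destruct (inS psi c') eqn:Ec'.
        -- apply (matchS_true_inv psi d c I); auto.
        -- rewrite B; auto. destruct (Nat.eqb_spec c' c); [subst; congruence|]. auto.
Qed.

Lemma supported_madd n A B : supported n A -> supported n B -> supported n (madd A B).
Proof. intros HA HB i j H. unfold madd. rewrite HA, HB by auto. apply Ceq; simpl; ring. Qed.
Lemma supported_mscale n c A : supported n A -> supported n (mscale c A).
Proof. intros HA i j H. unfold mscale. rewrite HA by auto. apply Ceq; simpl; ring. Qed.

Lemma CPTP_ext n m Phi Psi : (forall A, supported n A -> Phi A = Psi A) -> CPTP n m Psi -> CPTP n m Phi.
Proof.
  intros E [H1 [H2 [H3 [H4 H5]]]]. split; [|split; [|split; [|split]]].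
  - intros A HA. rewrite E; auto.
  - intros A B HA HB. rewrite !E; auto. apply supported_madd; auto.
  - intros c A HA. rewrite !E; auto. apply supported_mscale; auto.
  - intros A HA. rewrite E; auto.
  - intros r X Hr HX. replace (ampl n m r Phi X) with (ampl n m r Psi X). apply H5; auto.
    extensionality I; extensionality J. unfold ampl. rewrite E; auto.
    intros i j Hij. unfold block, inb. destruct Hij as [H|H].
    + rewrite (proj2 (Nat.ltb_ge _ _) H). reflexivity.
    + rewrite (proj2 (Nat.ltb_ge _ _) H), Bool.andb_false_r. reflexivity.
Qed.

Definition e0 : Vec := fun i => if Nat.eqb i 0 then C1 else C0.

Lemma incoh_e0 d k : (1 <= d)%nat -> (2 <= k)%nat -> incoh d (k - 1) (projm d 0).
Proof.
  intros Hd Hk. split.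
  - split; [split|].
    + intros i j H. unfold projm, inb. destruct (Nat.eqb_spec i 0), (Nat.eqb_spec j 0); simpl; auto; lia.
    + intros v. unfold quad. rewrite (Csum_delta d 0); try lia.
      2:{ intros i Hi Hne. apply Csum_0; intros j Hj. unfold projm. destruct (Nat.eqb_spec i 0); try lia. simpl. ring. }
      rewrite (Csum_delta d 0); try lia.
      2:{ intros j Hj Hne. unfold projm. destruct (Nat.eqb_spec j 0); try lia. rewrite Bool.andb_false_r. simpl. ring. }
      unfold projm, inb. rewrite (proj2 (Nat.ltb_lt 0 d)) by lia. simpl. split; try nra.
    + unfold trace. rewrite (Csum_delta d 0); try lia.
      * unfold projm, inb. rewrite (proj2 (Nat.ltb_lt 0 d)) by lia. reflexivity.
      * intros i Hi Hne. unfold projm. destruct (Nat.eqb_spec i 0); try lia. reflexivity.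
  - exists 1%nat, (fun _ => 1), (fun _ => e0). split; [|split].
    + intros l Hl. split; [lra|split].
      * split.
        -- intros i Hi. unfold e0. destruct (Nat.eqb_spec i 0); auto; lia.
        -- assert (RtoC (vnorm2 d e0) = C1).
           { rewrite vnorm2_C. rewrite (Csum_delta d 0); try lia.
             - unfold e0; simpl. apply Ceq; simpl; ring.
             - intros i Hi Hne. unfold e0. destruct (Nat.eqb_spec i 0); try lia. apply Ceq; simpl; ring. }
           injection H; auto.
      * unfold CR. apply Nat.le_trans with 1%nat; [|lia]. apply (filter_single _ 0). apply seq_NoDup.
        intros p. unfold e0. destruct (Nat.eqb_spec p 0); auto. destruct (Ceq_dec C0 C0); try congruence; try discriminate.
    + simpl. ring.
    + extensionality i; extensionality j. unfold Msum, mscale, outer, projm, e0, inb. simpl.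
      rewrite (proj2 (Nat.ltb_lt 0 d)) by lia.
      destruct (Nat.eqb_spec i 0), (Nat.eqb_spec j 0); simpl; apply Ceq; simpl; ring.
Qed.

Lemma density_supported n A : density n A -> supported n A.
Proof. intros [[H _] _]; auto. Qed.

Lemma image_kprod d kk V ds (Hds : dimprod ds = (d * 2 ^ d)%nat \/ dimprod ds = (2 ^ d)%nat) sigma kd :
  CPTP d (dimprod ds) (conj_map d V) ->
  (forall psi, unitV d psi -> (CR d psi <= kd)%nat -> kprod_pure ds kk (Vv d V psi)) ->
  incoh d kd sigma -> kprod ds kk (conj_map d V sigma).
Proof.
  intros HC Hpure [Hden [L [p [psi [Hl [Hs E]]]]]]. split.
  - apply density_CPTP with d; auto.
  - exists L, p, (fun l => Vv d V (psi l)). split; [|split]; auto.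
    + intros l Hl'. destruct (Hl l Hl') as [Hp [Hu Hcr]]. split; auto.
    + rewrite E. apply conj_map_Msum.
Qed.

Theorem theorem3
  (D : nat -> Mat -> Mat -> R)
  (D_nonneg : forall (n : nat) (A B : Mat), density n A -> density n B -> 0 <= D n A B)
  (D_contr : forall (n m : nat) (Phi : Mat -> Mat) (A B : Mat),
      CPTP n m Phi -> density n A -> density n B -> D m (Phi A) (Phi B) <= D n A B)
  (d : nat) (rho : Mat) (Hrho : density d rho) (k : nat) (Hk : (2 <= k <= d)%nat) :
  E_D D (qudit_qubits d) (k + 1)%nat (rho' d rho) <= C_D D d k rho /\
  E_D D (qubits d) k (Delta_map d (rho' d rho)) <= C_D D d k rho.
Proof.
  assert (Hd : (1 <= d)%nat) by lia.
  assert (HSC1 : exists x, exists sigma, incoh d (k - 1) sigma /\ x = D d rho sigma).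
  { exists (D d rho (projm d 0)), (projm d 0). split; auto. apply incoh_e0; lia. }
  assert (HSC2 : forall x, (exists sigma, incoh d (k - 1) sigma /\ x = D d rho sigma) -> 0 <= x).
  { intros x [s [[Hs _] ->]]. apply D_nonneg; auto. }
  split.
  - assert (HC : CPTP d (d * 2 ^ d) (rho' d)).
    { apply CPTP_ext with (conj_map d (V1 d)). apply rho'_eq. apply CPTP_conj, iso_V1. }
    assert (HC' : CPTP d (dimprod (qudit_qubits d)) (conj_map d (V1 d))).
    { rewrite dimprod_qq. apply CPTP_conj, iso_V1. }
    assert (Him : forall sigma, incoh d (k - 1) sigma -> kprod (qudit_qubits d) (k + 1 - 1) (rho' d sigma)).
    { intros sigma Hs. rewrite rho'_eq by (apply density_supported; apply Hs).
      apply image_kprod with (kd := (k - 1)%nat); auto. left; apply dimprod_qq.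
      intros psi Hu Hcr. replace (k + 1 - 1)%nat with k by lia. apply kprod1; auto; lia. }
    unfold E_D, C_D. apply inf_compare; auto.
    + destruct HSC1 as [x [s [Hs _]]]. exists (D (dimprod (qudit_qubits d)) (rho' d rho) (rho' d s)).
      exists (rho' d s); split; auto.
    + intros x [s [[Hs _] ->]]. apply D_nonneg; auto. rewrite dimprod_qq. apply density_CPTP with d; auto.
    + intros x [s [Hs ->]]. exists (D (dimprod (qudit_qubits d)) (rho' d rho) (rho' d s)). split.
      * exists (rho' d s). split; auto.
      * rewrite dimprod_qq. apply D_contr; auto. apply Hs.
  - set (Phi := fun A => Delta_map d (rho' d A)).
    assert (HC : CPTP d (2 ^ d) Phi).
    { apply CPTP_ext with (conj_map d (V2 d)). intros; apply Delta_eq; auto. apply CPTP_conj, iso_V2. }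
    assert (HC' : CPTP d (dimprod (qubits d)) (conj_map d (V2 d))).
    { unfold qubits; rewrite dimprod_rep. apply CPTP_conj, iso_V2. }
    assert (Him : forall sigma, incoh d (k - 1) sigma -> kprod (qubits d) (k - 1) (Phi sigma)).
    { intros sigma Hs. unfold Phi. rewrite Delta_eq by (auto; apply density_supported; apply Hs).
      apply image_kprod with (kd := (k - 1)%nat); auto. right; unfold qubits; apply dimprod_rep.
      intros psi Hu Hcr. apply kprod2; auto; lia. }
    assert (Hdq : dimprod (qubits d) = (2 ^ d)%nat) by (unfold qubits; apply dimprod_rep).
    unfold E_D, C_D. fold (Phi rho). apply inf_compare; auto.
    + destruct HSC1 as [x [s [Hs _]]]. exists (D (dimprod (qubits d)) (Phi rho) (Phi s)).
      exists (Phi s); split; auto.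
    + intros x [s [[Hs _] ->]]. apply D_nonneg; auto. rewrite Hdq. apply density_CPTP with d; auto.
    + intros x [s [Hs ->]]. exists (D (dimprod (qubits d)) (Phi rho) (Phi s)). split.
      * exists (Phi s). split; auto.
      * rewrite Hdq. apply D_contr; auto. apply Hs.
Qed.
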